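(* Let $(X_n)_{n\ge0}$ be simple random walk on a finite rooted tree $T$ with a self-loop at the root, started at $v_0$, with stationary distribution $\pi$, and let $\eta$ be an optimal strong stationary time for it. Let $\tau$ be a random time independent of $(X,\eta)$ with $0<\tau<\infty$ almost surely, and assume $P_{v_0}(\eta<\tau)>0$. Then for every vertex $v$, \[ P_{v_0}\big(X_{\tau-1}=v\,\big|\,\eta<\tau\big)=\pi(v). \]
   Context: Degrees count the self-loop twice; simple random walk moves from $v$ along a uniformly chosen edge-end at $v$, so $\pi(v)=\deg(v)/\sum_z\deg(z)$. A strong stationary time for the walk started at $v_0$ is a stopping time $\eta$ (possibly with respect to a filtration enlarged by independent extra randomness) with $P_{v_0}(X_\eta=y,\eta=k)=\pi(y)P_{v_0}(\eta=k)$ for all $y,k$; it is optimal if $P_{v_0}(\eta>t)=\max_y[1-P^t(v_0,y)/\pi(y)]$ for all $t$. *)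

(* Defs.v *)
From HB Require Import structures.
From mathcomp Require Import all_boot all_order all_algebra.
From mathcomp Require Import all_classical all_reals all_analysis.
Set Implicit Arguments. Unset Strict Implicit. Unset Printing Implicit Defensive.
Import Order.TTheory GRing.Theory Num.Theory.
Local Open Scope classical_set_scope.
Local Open Scope ring_scope.

(* A finite tree on the vertex set V: a simple graph (symmetric, irreflexive
   adjacency relation) that is connected and has no cycle (a cycle being a
   duplicate-free cyclic sequence of at least 3 vertices with consecutive
   vertices adjacent). *)
Definition is_tree (V : finType) (adj : rel V) : Prop :=
  [/\ symmetric adj, irreflexive adj,
      (forall x y : V, connect adj x y) &
      (forall p : seq V, ucycle adj p -> (size p < 3)%N)].

(* Degree in the tree augmented by one self-loop at the root [r];
   the self-loop counts twice. *)
Definition deg (V : finType) (adj : rel V) (r v : V) : nat :=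
  (#|[set w | adj v w]| + 2 * (v == r))%N.

Definition srw {R : realType} (V : finType) (adj : rel V) (r v w : V) : R :=
  ((adj v w) + 2 * ((v == r) && (w == r)))%:R / (deg adj r v)%:R.

Fixpoint srw_pow {R : realType} (V : finType) (adj : rel V) (r : V) (t : nat)
  (x y : V) : R :=
  match t with
  | 0 => (x == y)%:R
  | t'.+1 => \sum_(z : V) srw_pow adj r t' x z * srw adj r z y
  end.

Definition stat_pi {R : realType} (V : finType) (adj : rel V) (r v : V) : R :=
  (deg adj r v)%:R / (\sum_(z : V) deg adj r z)%:R.

Section Prob.
Context {d : measure_display} {Omega : measurableType d} {R : realType}.
Context (P : probability Omega R).
Local Open Scope ereal_scope.

Definition is_filtration (F : nat -> set (set Omega)) : Prop :=
  forall n, [/\ sigma_algebra setT (F n), F n `<=` measurable & F n `<=` F n.+1].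

Definition markov_wrt (V : finType) (K : V -> V -> R)
  (F : nat -> set (set Omega)) (X : nat -> Omega -> V) : Prop :=
  (forall n v, F n [set w | X n w = v]) /\
  (forall n (A : set Omega) (v u : V), F n A ->
     P (A `&` [set w | X n w = v] `&` [set w | X n.+1 w = u])
     = (K v u)%:E * P (A `&` [set w | X n w = v])).

(* Stopping time (value None = +infinity) w.r.t. the filtration F. *)
Definition stopping_time (F : nat -> set (set Omega)) (eta : Omega -> option nat) :
  Prop := forall k, F k [set w | eta w = Some k].

Definition strong_stationary (V : finType) (pi : V -> R) (X : nat -> Omega -> V)
  (eta : Omega -> option nat) : Prop :=
  forall (y : V) (k : nat),
    P ([set w | eta w = Some k] `&` [set w | X k w = y])
    = (pi y)%:E * P [set w | eta w = Some k].

Definition eta_gt (eta : Omega -> option nat) (t : nat) : set Omega :=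
  [set w | if eta w is Some k then (t < k)%N else true].

Definition optimal_sst (V : finType) (pi : V -> R) (Pt : nat -> V -> V -> R)
  (v0 : V) (eta : Omega -> option nat) : Prop :=
  forall t : nat,
    (forall y, ((1 - Pt t v0 y / pi y)%R)%:E <= P (eta_gt eta t)) /\
    (exists y, P (eta_gt eta t) = ((1 - Pt t v0 y / pi y)%R)%:E).

Definition gen_X_eta (V : finType) (X : nat -> Omega -> V)
  (eta : Omega -> option nat) : set (set Omega) :=
  <<s [set A | (exists n v, A = [set w | X n w = v]) \/
               (exists j, A = [set w | eta w = j])] >>.

Definition indep_tau (V : finType) (X : nat -> Omega -> V)
  (eta : Omega -> option nat) (tau : Omega -> nat) : Prop :=
  forall (k : nat) (B : set Omega), gen_X_eta X eta B ->
    P ([set w | tau w = k] `&` B) = P [set w | tau w = k] * P B.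

End Prob.

(* Main.v *)
Require Import Defs.
From HB Require Import structures.
From mathcomp Require Import all_boot all_order all_algebra.
From mathcomp Require Import all_classical all_reals all_analysis.
Import Order.TTheory GRing.Theory Num.Theory.
Local Open Scope classical_set_scope.
Local Open Scope ring_scope.

Lemma stat_step (R : realType) (V : finType) (adj : rel V) (r : V) :
  symmetric adj -> forall v,
  \sum_z (@stat_pi R V adj r z) * srw adj r z v = stat_pi adj r v.
Proof.
move=> sym v.
have E : forall z, (@stat_pi R V adj r z) * srw adj r z v =
   ((adj z v) + 2 * ((z == r) && (v == r)))%:R / (\sum_(z : V) deg adj r z)%:R.
  move=> z; rewrite /stat_pi /srw.
  have [d0|dn0] := eqVneq (deg adj r z) 0%N.
    move: (d0); rewrite /deg => /eqP; rewrite addn_eq0 => /andP[/eqP c0 /eqP].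
    case: (z == r) => //= _.
    have -> : adj z v = false.
      apply/negP => azv; move/card0_eq: c0 => /(_ v) /negbT/negP; apply.
      by rewrite in_setE.
    by rewrite muln0 addn0 /= !mul0r mulr0.
  by rewrite mulrC -mulrA mulKf // pnatr_eq0.
rewrite (eq_bigr _ (fun z _ => E z)) -mulr_suml -natr_sum /stat_pi; congr (_%:R / _).
rewrite big_split /= /deg; congr (_ + _)%N.
  have -> : \sum_(z : V) (adj z v : nat) = \sum_(z | adj v z) 1%N.
    rewrite [RHS]big_mkcond; apply: eq_bigr => z _; rewrite sym; by case: (adj v z).
  rewrite sum1_card; apply: eq_card => w.
  by apply/idP/idP => H; [rewrite in_setE | move: H; rewrite in_setE].
rewrite (bigD1 r) //= eqxx /= big1 ?addn0 //.
by move=> z /negbTE ->; rewrite muln0.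
Qed.

Lemma stat_pow (R : realType) (V : finType) (adj : rel V) (r : V) :
  symmetric adj -> forall m v,
  \sum_y (@stat_pi R V adj r y) * srw_pow adj r m y v = stat_pi adj r v.
Proof.
move=> sym; elim=> [|m IH] v /=.
  rewrite (bigD1 v) //= eqxx mulr1 big1 ?addr0 // => y /negbTE ->; by rewrite mulr0.
under eq_bigr do rewrite mulr_sumr.
rewrite exchange_big /= -(@stat_step R V adj r sym v); apply: eq_bigr => z _.
by rewrite -IH mulr_suml; apply: eq_bigr => y _; rewrite mulrA.
Qed.

Theorem lemma2p10
  (V : finType) (adj : rel V) (root v0 : V)
  (d : measure_display) (Omega : measurableType d) (R : realType)
  (P : probability Omega R)
  (F : nat -> set (set Omega)) (X : nat -> Omega -> V)
  (eta : Omega -> option nat) (tau : Omega -> nat) :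
  is_tree adj ->
  is_filtration F ->
  P [set w | X 0%N w = v0] = 1%E ->
  markov_wrt P (@srw R V adj root) F X ->
  stopping_time F eta ->
  strong_stationary P (@stat_pi R V adj root) X eta ->
  optimal_sst P (@stat_pi R V adj root) (@srw_pow R V adj root) v0 eta ->
  (forall k, measurable [set w | tau w = k]) ->
  P [set w | tau w = 0%N] = 0%E ->
  indep_tau P X eta tau ->
  let E_lt := [set w | exists2 j, eta w = Some j & (j < tau w)%N] in
  (0 < P E_lt)%E ->
  forall v : V,
    fine (P (E_lt `&` [set w | X (tau w).-1 w = v])) / fine (P E_lt)
    = @stat_pi R V adj root v.
Proof.
move=> [sym _ _ _] Hfil _ [Xad Hmk] Hst Hsst _ Htau _ Hind E_lt HE v.
pose pi := @stat_pi R V adj root.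
have PE : forall A, (P : {content set Omega -> \bar R}) A = P A := fun _ => erefl.
have {}Hsst : forall (y : V) (k : nat),
    P ([set w | eta w = Some k] `&` [set w | X k w = y])
    = ((pi y)%:E * P [set w | eta w = Some k])%E := Hsst.
have {}Hmk : forall n (A : set Omega) (y u : V), F n A ->
     P (A `&` [set w | X n w = y] `&` [set w | X n.+1 w = u])
     = ((srw adj root y u)%:E * P (A `&` [set w | X n w = y]))%E := Hmk.
have {}Hind : forall (k : nat) (B : set Omega), gen_X_eta X eta B ->
    P ([set w | tau w = k] `&` B) = (P [set w | tau w = k] * P B)%E := Hind.
have Fm : forall n A, F n A -> measurable A.
  by move=> n A; case: (Hfil n) => _ + _; apply.
have Finc : forall n A, F n A -> F n.+1 A.
  by move=> n A; case: (Hfil n) => _ _; apply.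
have mX : forall n y, measurable [set w | X n w = y] := fun n y => Fm _ _ (Xad n y).
have mG : forall j, measurable [set w | eta w = Some j] := fun j => Fm _ _ (Hst j).
have sU : forall S (A B : set Omega), sigma_algebra setT S -> S A -> S B -> S (A `|` B).
  move=> S A B [_ _ hU] hA hB.
  have -> : A `|` B = \bigcup_k (if k is 0%N then A else B).
    apply/seteqP; split => w /=.
      by case => h; [exists 0%N | exists 1%N].
    by case => -[|k] _ h; [left|right].
  by apply: hU => -[|k].
pose p A := fine (P A).
have pE : forall A, measurable A -> P A = (p A)%:E.
  by move=> A mA; rewrite /p fineK //; apply: fin_num_measure.
have p0 : p set0 = 0 by rewrite /p measure0.
have pU : forall A B, measurable A -> measurable B -> A `&` B = set0 ->
    p (A `|` B) = p A + p B.
  move=> A B mA mB AB; apply: EFin_inj; rewrite EFinD -!pE //; last exact: measurableU.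
  exact: measureU.
have Hsstr : forall y k, p ([set w | eta w = Some k] `&` [set w | X k w = y])
    = pi y * p [set w | eta w = Some k].
  move=> y k; apply: EFin_inj; rewrite EFinM -!pE //; try exact: Hsst.
  exact: measurableI.
have Hmkr : forall n A y u, F n A ->
     p (A `&` [set w | X n w = y] `&` [set w | X n.+1 w = u])
     = srw adj root y u * p (A `&` [set w | X n w = y]).
  move=> n A y u FA; have mA := Fm _ _ FA.
  apply: EFin_inj; rewrite EFinM -!pE //; try exact: Hmk.
  - exact: (measurableI _ _ mA (mX n y)).
  - exact: (measurableI _ _ (measurableI _ _ mA (mX n y)) (mX _ u)).
have Hindr : forall k B, gen_X_eta X eta B -> measurable B ->
    p ([set w | tau w = k] `&` B) = p [set w | tau w = k] * p B.
  move=> k B gB mB; apply: EFin_inj; rewrite EFinM -!pE //; try exact: Hind.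
  exact: (measurableI _ _ (Htau k) mB).
have part_s : forall (C : set Omega) k (s : seq V), uniq s -> measurable C ->
    measurable (C `&` [set w | X k w \in s]) /\
    p (C `&` [set w | X k w \in s]) = \sum_(z <- s) p (C `&` [set w | X k w = z]).
  move=> C k; elim=> [|z s IH] /=.
    move=> _ mC; rewrite big_nil.
    have -> : C `&` [set w | X k w \in [::]] = set0.
      by apply/seteqP; split => w //= [].
    by [].
  move=> /andP[zs us] mC; have [m1 e1] := IH us mC.
  have -> : C `&` [set w | X k w \in z :: s] =
      (C `&` [set w | X k w = z]) `|` (C `&` [set w | X k w \in s]).
    apply/seteqP; split => w /=.
      by case=> cw; rewrite in_cons => /orP[/eqP h|h]; [left|right].
    by case=> -[cw h]; split => //; rewrite in_cons ?h ?eqxx //= orbT.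
  split; first by apply: measurableU => //; apply: measurableI.
  rewrite pU //; last first.
  - apply/seteqP; split => w //= [[_ h1] [_ h2]].
    by move: zs; rewrite -h1 h2.
  - exact: measurableI.
  by rewrite big_cons e1.
have part : forall (C : set Omega) k, measurable C ->
    p C = \sum_(z : V) p (C `&` [set w | X k w = z]).
  move=> C k mC; have [_ <-] := part_s C k (index_enum V) (index_enum_uniq V) mC.
  congr (p _); apply/seteqP; split => w /=; first by move=> h; split => //; rewrite mem_index_enum.
  by case.
pose Le t := [set w | exists2 j, eta w = Some j & (j <= t)%N].
have Le0 : Le 0%N = [set w | eta w = Some 0%N].
  apply/seteqP; split => w /=; last by move=> h; exists 0%N.
  by case=> j h; rewrite leqn0 => /eqP hj; rewrite h hj.
have LeS : forall t, Le t.+1 = Le t `|` [set w | eta w = Some t.+1].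
  move=> t; apply/seteqP; split => w /=.
    by case=> j h; rewrite leq_eqVlt ltnS => /orP[/eqP hj|hj]; [right; rewrite h hj|left; exists j].
  by case=> [[j h hj]|h]; [exists j => //; apply: leqW | exists t.+1].
have LeD : forall t, Le t `&` [set w | eta w = Some t.+1] = set0.
  move=> t; apply/seteqP; split => w //= [[j h hj] h2].
  by move: hj; rewrite h in h2; case: h2 => ->; rewrite ltnn.
have FLe : forall t, F t (Le t).
  elim=> [|t IH]; first by rewrite Le0.
  by rewrite LeS; apply: sU; [case: (Hfil t.+1) | apply: Finc | apply: Hst].
have mLe : forall t, measurable (Le t) := fun t => Fm _ _ (FLe t).
have SSTp : forall t y, p (Le t `&` [set w | X t w = y]) = pi y * p (Le t).
  elim=> [|t IH] y; first by rewrite Le0; apply: Hsstr.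
  rewrite LeS setIUl pU //; last first.
  - apply/seteqP; split => w //= [[h1 _] [h2 _]].
    by have := LeD t; move/seteqP => [+ _] => /(_ w (conj h1 h2)).
  - exact: measurableI.
  - exact: measurableI.
  rewrite Hsstr (part _ t); last exact: measurableI.
  under eq_bigr => z _ do rewrite setIAC Hmkr // IH.
  rewrite (pU _ _ (mLe t) (mG t.+1) (LeD t)).
  rewrite mulrDr; congr (_ + _).
  rewrite /pi -[in RHS](@stat_step R V adj root sym y) mulr_suml; apply: eq_bigr => z _.
  by rewrite mulrCA mulrA.
have sI : forall S (A B : set Omega), sigma_algebra setT S -> S A -> S B -> S (A `&` B).
  move=> S A B hS hA hB; case: (hS) => _ hC _.
  have -> : A `&` B = setT `\` ((setT `\` A) `|` (setT `\` B)).
    by rewrite !setTD setCU !setCK.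
  by apply: (hC); apply: sU => //; apply: (hC).
pose Sg := gen_X_eta X eta.
have sSg : sigma_algebra setT Sg by apply: smallest_sigma_algebra.
have SgG : forall j, Sg [set w | eta w = Some j].
  by move=> j; apply: sub_sigma_algebra; right; exists (Some j).
have SgX : forall n y, Sg [set w | X n w = y].
  by move=> n y; apply: sub_sigma_algebra; left; exists n, y.
have SgLe : forall t, Sg (Le t).
  elim=> [|t IH]; first by rewrite Le0.
  by rewrite LeS; apply: (sU Sg).
pose L' k := if k is t.+1 then Le t else set0.
have mL' : forall k, measurable (L' k) by case => [|t] /=; [exact: measurable0 | exact: mLe].
have gL : forall k, Sg (L' k).
  by case => [|t] /=; [case: sSg | exact: SgLe].
have mLX : forall k, measurable (L' k `&` [set w | X k.-1 w = v]).
  by move=> k; apply: measurableI.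
have gLX : forall k, Sg (L' k `&` [set w | X k.-1 w = v]).
  by move=> k; apply: (sI Sg).
have EE : E_lt = \bigcup_k ([set w | tau w = k] `&` L' k).
  apply/seteqP; split => w /=.
    case=> j h hj; exists (tau w) => //; split => //; move: hj.
    by case: (tau w) => [|t] //= hj; exists j.
  case=> k _ [hk]; case: k hk => [|t] hk //= [j h hj]; exists j => //.
  by rewrite hk.
have EEv : E_lt `&` [set w | X (tau w).-1 w = v] =
    \bigcup_k ([set w | tau w = k] `&` (L' k `&` [set w | X k.-1 w = v])).
  rewrite EE; apply/seteqP; split => w /=.
    by case=> -[k _ [hk hL]] hx; exists k => //; split => //; split => //; rewrite -hk.
  by case=> k _ [hk [hL hx]]; split; [exists k | rewrite hk].
have mE : measurable E_lt.
  by rewrite EE; apply: bigcup_measurable => k _; apply: measurableI.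
have key : P (E_lt `&` [set w | X (tau w).-1 w = v]) = ((pi v)%:E * P E_lt)%E.
  have h1 := measure_semi_bigcup P
    (A := fun k => [set w | tau w = k] `&` (L' k `&` [set w | X k.-1 w = v])).
  have h2 := measure_semi_bigcup P (A := fun k => [set w | tau w = k] `&` L' k).
  rewrite EEv EE; rewrite !PE in h1 h2.
  have tr : forall S : nat -> set Omega, trivIset setT (fun k => [set w | tau w = k] `&` S k).
    by move=> S i j _ _ [w [[hi _] [hj _]]]; rewrite -hi -hj.
  rewrite h1 ?h2; last first.
  - by apply: bigcup_measurable => k _; apply: measurableI.
  - exact: tr.
  - by move=> k; apply: measurableI.
  - by apply: bigcup_measurable => k _; apply: measurableI.
  - exact: tr.
  - by move=> k; apply: measurableI.
  rewrite -nneseriesZl; last by move=> k _; apply: measure_ge0.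
  apply: eq_eseriesr => k _.
  apply: (etrans (pE _ (measurableI _ _ (Htau k) (mLX k)))).
  apply: (etrans _ (congr1 (mule (pi v)%:E) (esym (pE _ (measurableI _ _ (Htau k) (mL' k)))))).
  have -> : forall a b : R, ((a%:E) * (b%:E))%E = (a * b)%:E by [].
  congr EFin.
  rewrite (Hindr k _ (gLX k) (mLX k)) (Hindr k _ (gL k) (mL' k)).
  case: k => [|t] /=; first by rewrite set0I p0 !mulr0.
  by rewrite SSTp mulrCA.
have pE0 : 0 < p E_lt by move: HE; rewrite (pE _ mE) lte_fin.
rewrite key (pE _ mE).
have -> : fine ((pi v)%:E * (p E_lt)%:E)%E = pi v * p E_lt by [].
by rewrite -/(p E_lt) mulfK // gt_eqF.
Qed.
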